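(* Let $L,n$ be positive integers and $B\in\mathcal M(L,n)$. Then \[\rho_N(B)=e^\star_{[L-1,L-1]}\,e^\star_{[L-2,L-1]}\cdots e^\star_{[2,L-1]}\,e^\star_{[1,L-1]}(B).\]
   Context: $\mathcal M(L,n)$ is the set of tuples $B=(B_1,\dots,B_L)$ of subsets of $[n]$, drawn with rows $1..L$ bottom to top, columns $1..n$ left to right, ball in $(r,j)$ iff $j\in B_r$. $\mathrm{cw}(B)$ scans columns left to right, each top to bottom, recording row numbers of balls. For a word $w$ and $i\ge1$, $\mathrm{Par}_i(w)$ writes ''('' for each letter $i+1$ and '')'' for each letter $i$, reading left to right, and iteratively matches a ''('' with a '')'' to its right when adjacent or separated only by matched parentheses. $e_i^\star(B)$ moves every ball of row $i+1$ whose letter in $\mathrm{cw}(B)$ is unmatched in $\mathrm{Par}_i(\mathrm{cw}(B))$ down to row $i$ in the same column. Products of operators act right to left, $e^\star_{[a,b]}=e^\star_ae^\star_{a+1}\cdots e^\star_b$ for $a\le b$, and $\rho_N(B)=e^\star_{[1,L-1]}e^\star_{[1,L-2]}\cdots e^\star_{[1,2]}e^\star_{[1,1]}(B)$. *)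

(* Defs.v *)
From mathcomp Require Import all_boot.
Set Implicit Arguments. Unset Strict Implicit. Unset Printing Implicit Defensive.

(* A ball configuration B in M(L,n): rows 1..L (row r is stored at index
   r-1 : 'I_L), columns 1..n (column j is stored at index j-1 : 'I_n).
   B_r is the set of columns containing a ball in row r. *)
Definition config (L n : nat) := {ffun 'I_L -> {set 'I_n}}.

(* B_r for a 1-based row number r (empty if r is not in 1..L). *)
Definition row_of L n (B : config L n) (r : nat) : {set 'I_n} :=
  if insub r.-1 is Some k then if r == 0 then set0 else B k else set0.

(* column word cw(B), each letter tagged with the column of its ball:
   columns left to right, each column read top (row L) to bottom (row 1). *)
Definition cw_tagged L n (B : config L n) : seq (nat * 'I_n) :=
  flatten [seq [seq (r, j) | r <- rev (iota 1 L) & j \in row_of B r]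
          | j <- enum 'I_n].

Definition cw L n (B : config L n) : seq nat := map fst (cw_tagged B).

(* Par_i bracketing: letter i+1 is "(", letter i is ")", read left to right;
   matching a "(" with a ")" to its right when they are adjacent or separated
   only by matched parentheses is the usual bracket matching, computed with a
   stack of currently unmatched "(".  The result is the list of columns of the
   unmatched "(" (i.e. unmatched letters i+1). *)
Fixpoint par_unmatched_open n (i : nat) (stack : seq 'I_n)
    (w : seq (nat * 'I_n)) : seq 'I_n :=
  match w with
  | [::] => stack
  | (a, j) :: w' =>
      if a == i.+1 then par_unmatched_open i (j :: stack) w'
      else if a == i then par_unmatched_open i (behead stack) w'
      else par_unmatched_open i stack w'
  end.

Definition estar L n (i : nat) (B : config L n) : config L n :=
  let U := [set j in par_unmatched_open i [::] (cw_tagged B)] in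
  [ffun k : 'I_L =>
     if k.+1 == i.+1 then B k :\: U
     else if k.+1 == i then B k :|: U
     else B k].

(* e^star_[a,b] = e_a e_{a+1} ... e_b (acting right to left, so e_b first). *)
Definition estar_int L n (a b : nat) (B : config L n) : config L n :=
  foldr (fun i C => estar i C) B (iota a (b.+1 - a)).

(* rho_N(B) = e_[1,L-1] e_[1,L-2] ... e_[1,2] e_[1,1] (B). *)
Definition rhoN L n (B : config L n) : config L n :=
  foldr (fun k C => estar_int 1 k C) B (rev (iota 1 L.-1)).

Definition rhoN' L n (B : config L n) : config L n :=
  foldr (fun a C => estar_int a L.-1 C) B (rev (iota 1 L.-1)).

(* Main.v *)
Require Import Defs.
From mathcomp Require Import all_boot zify.
Set Implicit Arguments. Unset Strict Implicit.

Definition slc (i a c : nat) : nat := if (c == i.+1) && (a == 0) then i else c.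
Definition asc (i c a : nat) : nat := if c == i.+1 then a - 1 else if c == i then a.+1 else a.

Ltac inner := match goal with |- context [if ?b then _ else _] =>
  lazymatch b with context [if _ then _ else _] => fail | _ => let E := fresh "E" in case E: b end end.

Lemma braid_step i c p q r :
  let p2 := q + r - minn p r in let q2 := minn p r in let r2 := p + q - minn p r in
  let x1 := slc i p c in let x2 := slc i.+1 q x1 in
  let y1 := slc i.+1 p2 c in let y2 := slc i q2 y1 in
  [/\ slc i r x2 = slc i.+1 r2 y2,
      asc i.+1 c p2 = (asc i.+1 x1 q) + (asc i x2 r) - minn (asc i c p) (asc i x2 r),
      asc i y1 q2 = minn (asc i c p) (asc i x2 r) &
      asc i.+1 y2 r2 = (asc i c p) + (asc i.+1 x1 q) - minn (asc i c p) (asc i x2 r)].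
Proof.
move=> p2 q2 r2 x1 x2 y1 y2.
have f1 : (i == i.+1) = false by lia.
have f2 : (i == i.+2) = false by lia.
have f3 : (i.+1 == i) = false by lia.
have f4 : (i.+2 == i) = false by lia.
have f5 : (i.+2 == i.+1) = false by lia.
have f6 : (i.+1 == i.+2) = false by lia.
have e0 : (i == i) = true by lia.
have e1 : (i.+1 == i.+1) = true by lia.
have e2 : (i.+2 == i.+2) = true by lia.
rewrite /y2 /y1 /x2 /x1 /r2 /q2 /p2 /slc /asc.
have [->|n0] := eqVneq c i; last have [->|n1] := eqVneq c i.+1;
  last have [->|n2] := eqVneq c i.+2;
  [ | | | have n3 : (c == i.+1 + 1) = false by lia;
          rewrite (negbTE n0) (negbTE n1) (negbTE n2) ?n3 /=];
  repeat (do 3 rewrite ?f1 ?f2 ?f3 ?f4 ?f5 ?f6 ?e0 ?e1 ?e2 /=; inner);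
  do 3 rewrite ?f1 ?f2 ?f3 ?f4 ?f5 ?f6 ?e0 ?e1 ?e2 /=;
  split; lia.
Qed.

Section Word.
Variable T : Type.

Fixpoint aw (i : nat) (w : seq (nat * T)) : nat :=
  if w is x :: w' then asc i x.1 (aw i w') else 0.
Definition sl (i a : nat) (x : nat * T) : nat * T :=
  if (x.1 == i.+1) && (a == 0) then (i, x.2) else x.
Fixpoint Ew (i : nat) (w : seq (nat * T)) : seq (nat * T) :=
  if w is x :: w' then sl i (aw i w') x :: Ew i w' else [::].

Lemma sl1 i a x : (sl i a x).1 = slc i a x.1.
Proof. by rewrite /sl /slc; case: ifP. Qed.
Lemma sl2 i a x : (sl i a x).2 = x.2.
Proof. by rewrite /sl; case: ifP. Qed.
Lemma pairE (x y : nat * T) : x.1 = y.1 -> x.2 = y.2 -> x = y.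
Proof. by case: x; case: y => ? ? ? ? /= -> ->. Qed.

Lemma braid_inv i w :
  let p := aw i w in let q := aw i.+1 (Ew i w) in let r := aw i (Ew i.+1 (Ew i w)) in
  [/\ Ew i (Ew i.+1 (Ew i w)) = Ew i.+1 (Ew i (Ew i.+1 w)),
      aw i.+1 w = q + r - minn p r,
      aw i (Ew i.+1 w) = minn p r &
      aw i.+1 (Ew i (Ew i.+1 w)) = p + q - minn p r].
Proof.
elim: w => [|x w IH] //=.
case: IH => E1 E2 E3 E4.
rewrite !sl1 E2 E3 E4 E1.
have := braid_step i x.1 (aw i w) (aw i.+1 (Ew i w)) (aw i (Ew i.+1 (Ew i w))).
move=> /= [H1 H2 H3 H4].
split.
- congr (_ :: _); apply: pairE; last by rewrite !sl2.
  by rewrite ?sl1.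
- by rewrite ?sl1.
- by rewrite ?sl1.
- by rewrite ?sl1.
Qed.

Lemma braid i w : Ew i (Ew i.+1 (Ew i w)) = Ew i.+1 (Ew i (Ew i.+1 w)).
Proof. by case: (braid_inv i w). Qed.


Lemma asc_slc_far i j a b c : (j.+1 < i) || (i.+1 < j) -> asc i (slc j b c) a = asc i c a.
Proof.
move=> h; rewrite /slc; case: ifP => // /andP[/eqP -> _]; rewrite /asc.
have -> : (j == i.+1) = false by lia.
have -> : (j == i) = false by lia.
have -> : (j.+1 == i.+1) = false by lia.
by have -> : (j.+1 == i) = false by lia.
Qed.

Lemma slc_far i j a b c : (j.+1 < i) || (i.+1 < j) -> slc i a (slc j b c) = slc j b (slc i a c).
Proof.
move=> h; rewrite /slc.
have f1 : (j == i.+1) = false by lia.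
have f2 : (i == j.+1) = false by lia.
repeat (rewrite ?f1 ?f2 /=; inner); rewrite ?f1 ?f2 /=; lia.
Qed.

Lemma comm_inv i j w : (j.+1 < i) || (i.+1 < j) ->
  [/\ Ew i (Ew j w) = Ew j (Ew i w), aw i (Ew j w) = aw i w & aw j (Ew i w) = aw j w].
Proof.
move=> h; elim: w => [|x w [E1 E2 E3]] //=.
rewrite !sl1 asc_slc_far // asc_slc_far; last by rewrite orbC.
rewrite E1 E2 E3; split => //.
congr (_ :: _); apply: pairE; last by rewrite !sl2.
by rewrite !sl1 slc_far.
Qed.

Definition F (s : seq nat) (w : seq (nat * T)) := foldr (fun i v => Ew i v) w s.

Lemma F_cat s t w : F (s ++ t) w = F s (F t w).
Proof. by rewrite /F foldr_cat. Qed.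

Lemma F_comm k Y w : all (fun j => (j.+1 < k) || (k.+1 < j)) Y -> F Y (Ew k w) = Ew k (F Y w).
Proof.
elim: Y => [|j Y IH] //= /andP[hj hY].
rewrite IH //.
by case: (comm_inv (F Y w) hj).
Qed.

Lemma K1 a m k w : a <= k -> k < a + m ->
  F (iota a m.+1) (Ew k w) = Ew k.+1 (F (iota a m.+1) w).
Proof.
move=> h1 h2.
have -> : iota a m.+1 = iota a (k - a) ++ [:: k; k.+1] ++ iota k.+2 (a + m - k - 1).
  have -> : m.+1 = (k - a) + (2 + (a + m - k - 1)) by lia.
  rewrite iotaD iotaD /=.
  have e : a + (k - a) = k by lia.
  by rewrite e addn2.
rewrite !F_cat F_comm; last first.
  apply/allP => j; rewrite mem_iota => /andP[hj _]; apply/orP; right; lia.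
rewrite /= braid.
rewrite F_comm //.
apply/allP => j; rewrite mem_iota => /andP[_ hj]; apply/orP; left; lia.
Qed.

Lemma K2 a m x w : all (fun k => a <= k < a + m) x ->
  F (iota a m.+1 ++ x) w = F (map succn x ++ iota a m.+1) w.
Proof.
elim: x w => [|k x IH] w; first by rewrite cats0.
move=> /andP[/andP[h1 h2] hx].
rewrite F_cat; change (F (k :: x) w) with (Ew k (F x w)).
by rewrite K1 // -F_cat IH.
Qed.

Fixpoint S1 a m := if m is m'.+1 then iota a m ++ S1 a m' else [::].
Fixpoint S2 a m := if m is m'.+1 then S2 a.+1 m' ++ iota a m else [::].

Lemma S1S a m : S1 a m.+1 = iota a m.+1 ++ S1 a m.
Proof. by []. Qed.
Lemma S2S a m : S2 a m.+1 = S2 a.+1 m ++ iota a m.+1.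
Proof. by []. Qed.

Lemma map_iotaS a m : map succn (iota a m) = iota a.+1 m.
Proof. by elim: m a => //= m IH a; rewrite IH. Qed.

Lemma map_S1 a m : map succn (S1 a m) = S1 a.+1 m.
Proof. by elim: m => // m IH; rewrite !S1S map_cat IH map_iotaS. Qed.

Lemma S1_range a m : all (fun k => a <= k < a + m) (S1 a m).
Proof.
elim: m => // m IH; rewrite S1S all_cat; apply/andP; split.
  by apply/allP => k; rewrite mem_iota.
by apply: sub_all IH => k /andP[-> /=]; lia.
Qed.

Lemma S2_range a m : all (fun k => a <= k < a + m) (S2 a m).
Proof.
elim: m a => // m IH a; rewrite S2S all_cat; apply/andP; split.
  by apply: sub_all (IH a.+1) => k /andP[h1 h2]; apply/andP; split; lia.
by apply/allP => k; rewrite mem_iota.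
Qed.

Lemma S12 a m w : F (S1 a m) w = F (S2 a m) w.
Proof.
elim: m a w => // m IH a w.
rewrite S1S S2S [RHS]F_cat -IH -F_cat -map_S1 -K2 //.
exact: S1_range.
Qed.

End Word.


Section Bridge.
Variables L n : nat.
Implicit Type B : config L n.

Definition ltw (x y : nat * 'I_n) := (x.2 < y.2) || ((nat_of_ord x.2 == nat_of_ord y.2) && (y.1 < x.1)).

Lemma ltw_trans : transitive ltw.
Proof.
move=> y x z; rewrite /ltw.
case: x => [r1 j1]; case: y => [r2 j2]; case: z => [r3 j3] /=.
case/orP => [h|/andP[/eqP e h]]; case/orP => [h'|/andP[/eqP e' h']]; apply/orP.
- by left; apply: ltn_trans h h'.
- by left; rewrite -e'.
- by left; rewrite e.
- by right; rewrite e e' eqxx /=; apply: ltn_trans h' h.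
Qed.

Lemma ltw_irr : irreflexive ltw.
Proof. by move=> x; rewrite /ltw ltnn eqxx ltnn. Qed.

Definition cfg (w : seq (nat * 'I_n)) : config L n :=
  [ffun k : 'I_L => [set j | (k.+1, j) \in w]].

Lemma row_ofS B (k : 'I_L) : row_of B k.+1 = B k.
Proof. by rewrite /row_of /= valK. Qed.

Lemma mem_cw B x : (x \in cw_tagged B) = (0 < x.1 <= L) && (x.2 \in row_of B x.1).
Proof.
apply/flatten_mapP/andP.
  move=> [j _ /mapP[r]]; rewrite mem_filter mem_rev mem_iota => /andP[hj hr] ->.
  by split => //=; lia.
case: x => r j /= [hr hj]; exists j; first by rewrite mem_enum.
apply/mapP; exists r => //; rewrite mem_filter hj mem_rev mem_iota; lia.
Qed.

Lemma sorted_cw B : sorted ltw (cw_tagged B).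
Proof.
rewrite sorted_pairwise; last exact: ltw_trans.
rewrite /cw_tagged.
have : pairwise (fun a b : 'I_n => a < b) (enum 'I_n).
  have := iota_ltn_sorted 0 n; rewrite -val_enum_ord sorted_map sorted_pairwise //.
  by move=> ? ? ?; apply: ltn_trans.
elim: (enum 'I_n) => [|j s IH] //= /andP[hj hs].
rewrite pairwise_cat IH // andbT; apply/andP; split.
  apply/allrelP => y z /mapP[r _ ->] /flatten_mapP[j' hj' /mapP[r' _ ->]].
  by rewrite /ltw /= ((allP hj) j' hj').
rewrite -sorted_pairwise; last exact: ltw_trans.
rewrite sorted_map; apply: sorted_filter; first by move=> ? ? ? /=; rewrite /ltw /= !eqxx /=; lia.
rewrite rev_sorted.
apply: sub_sorted (iota_ltn_sorted 1 L) => a b /=; rewrite /ltw /= eqxx ltnn /=.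
by [].
Qed.

Definition good (w : seq (nat * 'I_n)) := sorted ltw w && all (fun x => 0 < x.1 <= L) w.

Lemma cw_cfg w : good w -> cw_tagged (cfg w) = w.
Proof.
case/andP=> hs ha.
apply: (irr_sorted_eq ltw_trans ltw_irr) => //; first exact: sorted_cw.
case=> r j; rewrite mem_cw /=.
case: r => [|r] /=.
  by apply/esym/negP => /(allP ha) /=.
case: (leqP r.+1 L) => hr /=.
  by rewrite (row_ofS _ (Ordinal hr)) ffunE inE.
by apply/esym/negP => /(allP ha) /=; lia.
Qed.

Lemma cfg_cw : cancel (@cw_tagged L n) cfg.
Proof.
move=> B; apply/ffunP => k; apply/setP => j.
by rewrite ffunE inE mem_cw /= row_ofS ltn_ord.
Qed.

Lemma good_cw B : good (cw_tagged B).
Proof.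
rewrite /good sorted_cw /=; apply/allP => x; rewrite mem_cw; by case/andP.
Qed.

End Bridge.

Section Bridge2.
Variables L n : nat.
Implicit Type B : config L n.

Fixpoint Ul (i : nat) (w : seq (nat * 'I_n)) : seq 'I_n :=
  if w is x :: w' then
    (if (x.1 == i.+1) && (aw i w' == 0) then x.2 :: Ul i w' else Ul i w')
  else [::].

Lemma pum_Ul i st w : par_unmatched_open i st w = rev (Ul i w) ++ drop (aw i w) st.
Proof.
elim: w st => [|[c j] w IH] st /=; first by rewrite drop0.
rewrite /asc /=.
have [ec|hc] := eqVneq c i.+1.
  subst c; rewrite /= IH.
  case: (eqVneq (aw i w) 0) => [->|ne] /=.
    by rewrite ?drop0 ?sub0n rev_cons cat_rcons.
  by case: (aw i w) ne => // a _ /=; rewrite subn1.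
have [ec|hc2] := eqVneq c i.
  by subst c; rewrite IH; case: st.
by rewrite IH.
Qed.

Lemma Ul_mem i w j : j \in Ul i w -> (i.+1, j) \in w.
Proof.
elim: w => [|[c j0] w IH] //=.
case: ifP => [/andP[/eqP -> _]|_]; rewrite !in_cons.
  by case/orP => [/eqP ->|/IH ->]; rewrite ?eqxx ?orbT.
by move/IH ->; rewrite orbT.
Qed.

Lemma mem_Ew i w r j : uniq w ->
  ((r, j) \in Ew i w) =
  if r == i.+1 then ((i.+1, j) \in w) && (j \notin Ul i w)
  else if r == i then ((i, j) \in w) || (j \in Ul i w)
  else ((r, j) \in w).
Proof.
elim: w => [|[c j0] w IH] /=; first by case: ifP => //; case: ifP.
case/andP => hx hu.
rewrite !in_cons IH // /sl /=.
have f1 : (i.+1 == i) = false by lia.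
have f2 : (i == i.+1) = false by lia.
have [ec|hc] := eqVneq c i.+1; last first.
  rewrite /= !xpair_eqE.
  have hc' : (i.+1 == c) = false by lia.
  have [er|hr] := eqVneq r i.+1; first by subst r; rewrite ?hc'.
  have [er2|hr2] := eqVneq r i; last by [].
  by subst r; rewrite orbA.
subst c; rewrite /=.
have [ha|ha] := eqVneq (aw i w) 0.
  rewrite /= in_cons !xpair_eqE.
  have [er|hr] := eqVneq r i.+1.
    subst r; rewrite ?f1 /=.
    have [ej|hj] := eqVneq j j0; last by rewrite ?eqxx ?andbF ?andbT ?orbF.
    by rewrite ej (negbTE hx) /= andbF.
  have [er2|hr2] := eqVneq r i.
    subst r; rewrite ?f2 /=.
    by case: (j == j0); case: ((i, j) \in w); case: (j \in Ul i w); rewrite ?eqxx.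
  have hr' : (r == i) = false by lia.
  by rewrite ?hr'.
rewrite /= !xpair_eqE.
have [er|hr] := eqVneq r i.+1.
  subst r; rewrite /=.
  have [ej|hj] := eqVneq j j0; last by rewrite ?eqxx ?andbF ?andbT ?orbF.
  case hU: (j \in Ul i w); last by rewrite ?eqxx.
  by move: hx; rewrite -ej (Ul_mem hU).
have [er2|hr2] := eqVneq r i; last by [].
subst r; by rewrite ?f2.
Qed.

End Bridge2.

Section Bridge3.
Variables L n : nat.

Lemma mem_Ew_inv i (w : seq (nat * 'I_n)) z : z \in Ew i w ->
  exists2 z', z' \in w & z.2 = z'.2 /\ (z.1 = z'.1 \/ (z'.1 = i.+1 /\ z.1 = i)).
Proof.
elim: w => //= x w IH; rewrite in_cons => /orP[/eqP ->|/IH [z' hz' h]].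
  exists x; first by rewrite in_cons eqxx.
  rewrite /sl; case: ifP => [/andP[/eqP e _]|_] /=; split => //; [right | left] => //.
by exists z' => //; rewrite in_cons hz' orbT.
Qed.

Lemma aw_pos i (j : 'I_n) (w : seq (nat * 'I_n)) : pairwise (@ltw n) ((i.+1, j) :: w) ->
  (i, j) \in w -> 0 < aw i w.
Proof.
case: w => [|[a b] t] //= /andP[/andP[hxh _] /andP[/allP hh _]].
rewrite in_cons => /orP[/eqP eh|ht].
  case: eh => <- _; rewrite /asc /=.
  have -> : (i == i.+1) = false by lia.
  by rewrite eqxx.
have := hh _ ht; move: hxh; rewrite /ltw /=; lia.
Qed.

Lemma pw_Ew i (w : seq (nat * 'I_n)) : pairwise (@ltw n) w -> pairwise (@ltw n) (Ew i w).
Proof.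
elim: w => //= -[c j] w IH /andP[hx hw]; rewrite IH // andbT.
apply/allP => -[a b] /mem_Ew_inv [[a' b'] hz' /= [e2 e1]].
have := (allP hx) _ hz'; rewrite /ltw /= => hxz.
subst b.
rewrite /sl /=; case: ifP => [/andP[/eqP ec /eqP ha]|_] /=; rewrite /ltw /=; last by lia.
subst c.
case: e1 => [ea|[ea' ea]]; subst a; last by lia.
have [ei|ne] := eqVneq a' i; last by lia.
subst a'.
case/orP: hxz => [h|/andP[/eqP h2 _]]; first by rewrite h.
have eb : j = b' := val_inj h2.
subst b'.
exfalso.
have : 0 < aw i w by apply: (@aw_pos i j) => //=; rewrite hx hw.
by rewrite ha.
Qed.

Lemma good_Ew i (w : seq (nat * 'I_n)) : 0 < i -> good L w -> good L (Ew i w).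
Proof.
move=> hi /andP[hs ha]; apply/andP; split.
  by move: hs; rewrite !(sorted_pairwise (@ltw_trans n)); apply: pw_Ew.
apply/allP => -[a b] /mem_Ew_inv [[a' b'] hz' /= [e2 e1]].
have := (allP ha) _ hz'; rewrite /=; lia.
Qed.

Lemma estar_cw (C : config L n) i : 0 < i -> cw_tagged (estar i C) = Ew i (cw_tagged C).
Proof.
move=> hi; have gw := good_cw C.
rewrite -(cw_cfg (good_Ew hi gw)); congr cw_tagged.
have hu : uniq (cw_tagged C).
  by apply: (sorted_uniq (@ltw_trans n) (@ltw_irr n)); case/andP: gw.
have memC : forall (k : 'I_L) j, ((k.+1, j) \in cw_tagged C) = (j \in C k).
  by move=> k j; rewrite mem_cw /= row_ofS ltn_ord.
apply/ffunP => k; apply/setP => j.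
rewrite /estar !ffunE inE mem_Ew // pum_Ul /= cats0.
case: ifP => [/eqP e|_].
  by rewrite in_setD inE mem_rev -e memC andbC.
case: ifP => [/eqP e|_].
  by rewrite in_setU inE mem_rev -e memC.
by rewrite memC.
Qed.

Lemma fold_cw (C : config L n) s : all (fun i => 0 < i) s ->
  cw_tagged (foldr (fun i C => estar i C) C s) = F s (cw_tagged C).
Proof.
elim: s => //= i s IH /andP[hi hs].
by rewrite estar_cw // IH.
Qed.

End Bridge3.

Lemma fold_eq1 L n m (C : config L n) :
  foldr (fun k C => estar_int 1 k C) C (rev (iota 1 m)) = foldr (fun i C => estar i C) C (S1 1 m).
Proof.
elim: m C => // m IH C.
have -> : iota 1 m.+1 = iota 1 m ++ [:: m.+1] by rewrite -(addn1 m) iotaD add1n addn1.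
rewrite rev_cat S1S !foldr_cat IH.
by rewrite /= /estar_int subn1.
Qed.

Lemma fold_eq2 L n b a m (C : config L n) : a + m = b.+1 ->
  foldr (fun x C => estar_int x b C) C (rev (iota a m)) = foldr (fun i C => estar i C) C (S2 a m).
Proof.
elim: m a C => // m IH a C e.
rewrite S2S [iota a m.+1]/= rev_cons -cats1 !foldr_cat IH; last by rewrite addSnnS.
congr foldr; rewrite /= /estar_int.
by have -> : b.+1 - a = m.+1 by lia.
Qed.

Theorem lemma4p13 (L n : nat) (hL : 0 < L) (hn : 0 < n) (B : config L n) :
  rhoN B = rhoN' B.
Proof.
apply: (can_inj (@cfg_cw L n)).
rewrite /rhoN /rhoN' fold_eq1 (@fold_eq2 L n L.-1 1 L.-1); last by lia.
rewrite !fold_cw ?S12 //.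
  by apply: sub_all (S2_range 1 L.-1) => k /andP[].
by apply: sub_all (S1_range 1 L.-1) => k /andP[].
Qed.
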